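(* The flow-cut gap for Minimum Cooperative Cut can be as large as $n-1$: for every $n\ge 2$ there is a directed graph on $n$ nodes with terminals $s,t$ and a normalized, monotone nondecreasing submodular $f$ on its edges such that $f(C^* )/\nu^*=n-1$, where $C^*$ is an $f$-minimal $(s,t)$-cut and $\nu^*$ is the optimal value of the Maximum Cooperative Flow problem.
   Context: An $(s,t)$-cut is a set of edges whose removal disconnects all $s$-$t$ paths; $C^*$ minimizes $f$ over $(s,t)$-cuts. The Maximum Cooperative Flow problem is: maximize $\nu$ over $\nu\in\mathbb{R}$, $\varphi\in\mathbb{R}^{\mathcal{E}}$ subject to $\varphi\ge0$; $\sum_{e\in A}\varphi(e)\le f(A)$ for all $A\subseteq\mathcal{E}$; and $\sum_{e\in\delta^+(u)}\varphi(e)-\sum_{e\in\delta^-(u)}\varphi(e)=d(u)\nu$ for all nodes $u$, where $d(s)=1$, $d(t)=-1$, $d(u)=0$ otherwise. The flow-cut gap is the ratio $f(C^* )/\nu^*$. *)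

(* Defs.v *)
From HB Require Import structures.
From mathcomp Require Import all_boot all_order all_algebra.
From mathcomp Require Import reals.
Set Implicit Arguments. Unset Strict Implicit. Unset Printing Implicit Defensive.
Import Order.TTheory GRing.Theory Num.Theory.
Local Open Scope ring_scope.

(* A (simple, loopless) directed graph on the node set 'I_n is given by an
   irreflexive adjacency relation adj; its edges are the pairs (u,v) with adj u v. *)
Definition edge (n : nat) (adj : rel 'I_n) : finType :=
  {e : 'I_n * 'I_n | adj e.1 e.2}.

Definition etail n (adj : rel 'I_n) (e : edge adj) : 'I_n := (val e).1.
Definition ehead n (adj : rel 'I_n) (e : edge adj) : 'I_n := (val e).2.

Definition is_st_path n (adj : rel 'I_n) (s t : 'I_n) (p : seq (edge adj)) : bool :=
  match p with
  | [::] => false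
  | e0 :: p' =>
      [&& etail e0 == s,
          path (fun e1 e2 => ehead e1 == etail e2) e0 p',
          ehead (last e0 p') == t &
          uniq (s :: map (@ehead n adj) p)]
  end.

Definition is_st_cut n (adj : rel 'I_n) (s t : 'I_n) (C : {set edge adj}) : Prop :=
  forall p, is_st_path s t p -> has (fun e => e \in C) p.

Section SetFun.
Variables (R : realFieldType) (T : finType) (f : {set T} -> R).
Definition normalized : Prop := f set0 = 0.
Definition monotone : Prop := forall A B : {set T}, A \subset B -> f A <= f B.
Definition submodular : Prop :=
  forall A B : {set T}, f (A :|: B) + f (A :&: B) <= f A + f B.
End SetFun.

Definition min_coop_cut (R : realFieldType) n (adj : rel 'I_n) (s t : 'I_n)
  (f : {set edge adj} -> R) (C : {set edge adj}) : Prop :=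
  is_st_cut s t C /\ forall C', is_st_cut s t C' -> f C <= f C'.

Definition demand (R : realFieldType) n (s t u : 'I_n) : R :=
  if u == s then 1 else if u == t then -1 else 0.

Definition coop_flow_feasible (R : realFieldType) n (adj : rel 'I_n) (s t : 'I_n)
  (f : {set edge adj} -> R) (nu : R) (phi : {ffun edge adj -> R}) : Prop :=
  [/\ forall e, 0 <= phi e,
      forall A : {set edge adj}, \sum_(e in A) phi e <= f A &
      forall u : 'I_n,
        \sum_(e | etail e == u) phi e - \sum_(e | ehead e == u) phi e
          = demand R s t u * nu].

Definition max_coop_flow_value (R : realFieldType) n (adj : rel 'I_n) (s t : 'I_n)
  (f : {set edge adj} -> R) (nu : R) : Prop :=
  (exists phi, coop_flow_feasible s t f nu phi) /\
  (forall nu' phi', coop_flow_feasible s t f nu' phi' -> nu' <= nu).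

(* Main.v *)
Require Import Defs.
From HB Require Import structures.
From mathcomp Require Import all_boot all_order all_algebra.
From mathcomp Require Import reals.
From mathcomp Require Import lra zify.
Import Order.TTheory GRing.Theory Num.Theory.
Local Open Scope ring_scope.

Section Constr.
Variable m : nat.

Definition adjP : rel 'I_(m.+2) := fun u v => val v == (val u).+1.

Lemma adjP_irr : irreflexive adjP.
Proof. by move=> u; rewrite /adjP /= eqn_leq ltnn andbF. Qed.

Lemma mk_proof (k : 'I_m.+1) :
  adjP (widen_ord (leqnSn _) k, lift ord0 k).1 (widen_ord (leqnSn _) k, lift ord0 k).2.
Proof. by rewrite /adjP /= /bump. Qed.

Definition mk (k : 'I_m.+1) : edge adjP := @exist _ (fun e => adjP e.1 e.2) _ (mk_proof k).

Lemma he (e : edge adjP) : val (ehead e) = (val (etail e)).+1.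
Proof. by case: e => [[a b]] h; rewrite /ehead /etail /=; apply/eqP. Qed.

Lemma tl_lt (e : edge adjP) : (val (etail e) < m.+1)%N.
Proof. by have := ltn_ord (ehead e); rewrite he. Qed.

Lemma edge_eq (e1 e2 : edge adjP) : etail e1 = etail e2 -> e1 = e2.
Proof.
move=> h; apply: val_inj.
have hh : ehead e1 = ehead e2 by apply: val_inj; rewrite !he h.
have se : forall e : edge adjP, val e = (etail e, ehead e) by case=> [[a b]].
by rewrite !se h hh.
Qed.

Lemma mk_tail k : val (etail (mk k)) = val k. Proof. by []. Qed.
Lemma mk_head k : val (ehead (mk k)) = (val k).+1. Proof. by rewrite /ehead /= /bump. Qed.

Lemma sum_tail (R : nmodType) (c : R) (u : 'I_m.+2) :
  \sum_(e : edge adjP | etail e == u) c = if (val u < m.+1)%N then c else 0.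
Proof.
have [hu|hu] := ltnP (val u) m.+1.
  rewrite (@big_pred1 _ _ _ _ (mk (Ordinal hu))) // => e /=.
  apply/eqP/eqP => [h|->]; first by apply: edge_eq; apply: val_inj; rewrite h.
  by apply: val_inj.
rewrite big_pred0 // => e; apply/negP => /eqP h.
by have := tl_lt e; rewrite h ltnNge hu.
Qed.

Lemma sum_head (R : nmodType) (c : R) (u : 'I_m.+2) :
  \sum_(e : edge adjP | ehead e == u) c = if (0 < val u)%N then c else 0.
Proof.
case: (posnP (val u)) => hu.
  rewrite big_pred0 // => e; apply/negP => /eqP h.
  by have := he e; rewrite h hu.
have hk : ((val u).-1 < m.+1)%N by rewrite -ltnS prednK // ltn_ord.
rewrite (@big_pred1 _ _ _ _ (mk (Ordinal hk))) // => e /=.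
apply/eqP/eqP => [h|->].
  apply: edge_eq; apply: val_inj; rewrite /= -h he /=. by [].
by apply: val_inj; rewrite mk_head /= prednK.
Qed.

Definition mkn (k : nat) : edge adjP := mk (inord k).

Lemma mkn_tail k : (k < m.+1)%N -> val (etail (mkn k)) = k.
Proof. move=> hk; rewrite mk_tail; exact: inordK. Qed.
Lemma mkn_head k : (k < m.+1)%N -> val (ehead (mkn k)) = k.+1.
Proof. move=> hk; rewrite mk_head; congr S; exact: inordK. Qed.

Lemma path_mkn len k : (k + len <= m)%N ->
  path (fun e1 e2 : edge adjP => ehead e1 == etail e2) (mkn k) [seq mkn j | j <- iota k.+1 len].
Proof.
elim: len k => [|len IH] k hk //=.
rewrite IH ?addSnnS // andbT.
apply/eqP/val_inj; rewrite mkn_head ?mkn_tail //; lia.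
Qed.

Lemma last_iota' len k : last k (iota k.+1 len) = (k + len)%N.
Proof. by elim: len k => [|len IH] k /=; rewrite ?addn0 // IH addSnnS. Qed.

Definition p0 := [seq mkn k | k <- iota 0 m.+1].

Lemma uniq_p0 : uniq ((@ord0 m.+1) :: [seq ehead e | e <- p0]).
Proof.
have E : map val (map (@ehead _ _) p0) = iota 1 m.+1.
  rewrite /p0 -!map_comp.
  have -> : iota 1 m.+1 = map (addn 1) (iota 0 m.+1) by rewrite -iotaDl.
  apply/eq_in_map => j; rewrite mem_iota => /andP[_ hj].
  by rewrite add1n; exact: mkn_head.
rewrite -(map_inj_uniq val_inj) map_cons E.
exact: (iota_uniq 0 m.+2).
Qed.

Lemma p0_path : is_st_path ord0 ord_max p0.
Proof.
rewrite /p0 /= /is_st_path; apply/and4P; split.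
- by apply/eqP/val_inj; rewrite mkn_tail.
- by apply: path_mkn; rewrite add0n.
- by apply/eqP/val_inj; rewrite last_map last_iota' add0n mkn_head.
exact: uniq_p0.
Qed.

End Constr.
Section Main.
Variables (R : realFieldType) (m : nat).

Definition fE (A : {set edge (adjP m)}) : R := if A == set0 then 0 else 1.

Lemma fE_norm : normalized fE.
Proof. by rewrite /normalized /fE eqxx. Qed.

Lemma fE_mono : monotone fE.
Proof.
move=> A B sAB; rewrite /fE; case: ifP => hA; case: ifP => hB //.
by move: sAB; rewrite (eqP hB) subset0 hA.
Qed.

Lemma fE_sub : submodular fE.
Proof.
move=> A B; rewrite /fE setU_eq0.
case: (eqVneq A set0) => [->|hA]; first by rewrite set0I eqxx /= addr0 add0r.
case: (eqVneq B set0) => [->|hB]; first by rewrite setI0 eqxx /=.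
rewrite /=; case: ifP => _; lra.
Qed.

Lemma fE_T : fE setT = 1.
Proof.
rewrite /fE; case: eqP => // h.
by have := in_setT (@mk m ord0); rewrite h inE.
Qed.

Lemma flow_sum (nu : R) (phi : {ffun edge (adjP m) -> R}) :
  (forall u : 'I_m.+2,
        \sum_(e | etail e == u) phi e - \sum_(e | ehead e == u) phi e
          = demand R ord0 ord_max u * nu) ->
  \sum_e phi e = (m.+1)%:R * nu.
Proof.
move=> H.
have H1 : \sum_(u : 'I_m.+2) (val u)%:R * (demand R ord0 ord_max u * nu) = - ((m.+1)%:R * nu).
  rewrite (bigD1 ord_max) //= big1 ?addr0.
    by rewrite /demand /= eqxx mulN1r mulrN.
  move=> u hu; rewrite /demand (negbTE hu).
  case: eqP => [->|_]; first by rewrite mul0r.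
  by rewrite mul0r mulr0.
have H2 : \sum_(u : 'I_m.+2) (val u)%:R * (demand R ord0 ord_max u * nu) = - \sum_e phi e.
  rewrite -(eq_bigr _ (fun u _ => congr1 (fun x => (val u)%:R * x) (H u))).
  under eq_bigr do rewrite mulrBr !big_distrr /=.
  rewrite sumrB.
  have P1 : \sum_(u : 'I_m.+2) \sum_(e | etail e == u) (val u)%:R * phi e
            = \sum_e (val (etail e))%:R * phi e.
    symmetry; rewrite (partition_big (@etail _ _) xpredT) //=.
    by apply: eq_bigr => u _; apply: eq_bigr => e /eqP ->.
  have P2 : \sum_(u : 'I_m.+2) \sum_(e | ehead e == u) (val u)%:R * phi e
            = \sum_e (val (ehead e))%:R * phi e.
    symmetry; rewrite (partition_big (@ehead _ _) xpredT) //=.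
    by apply: eq_bigr => u _; apply: eq_bigr => e /eqP ->.
  rewrite P1 P2.
  rewrite -sumrB -sumrN; apply: eq_bigr => e _.
  by rewrite he -nat1r mulrDl mul1r opprD addrCA subrr addr0.
by apply: oppr_inj; rewrite -H2 H1.
Qed.

Lemma cons_const (c : R) (u : 'I_m.+2) :
  \sum_(e : edge (adjP m) | etail e == u) [ffun=> c] e
    - \sum_(e : edge (adjP m) | ehead e == u) [ffun=> c] e
  = demand R ord0 ord_max u * c.
Proof.
under eq_bigr do rewrite ffunE.
under [X in _ - X]eq_bigr do rewrite ffunE.
rewrite sum_tail sum_head /demand.
case: (u =P ord0) => [->|h0] /=; first by rewrite mul1r subr0.
case: (u =P ord_max) => [->|hm] /=.
  by rewrite ltnn /= sub0r mulN1r.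
have h1 : (0 < val u)%N by rewrite lt0n; apply/eqP => h; apply: h0; apply: val_inj.
have h2 : (val u < m.+1)%N.
  have := ltn_ord u; rewrite ltnS leq_eqVlt => /orP [/eqP h|] //.
  by case: hm; apply: val_inj.
by rewrite h1 h2 mul0r subrr.
Qed.

End Main.

Theorem corollary1 (R : realType) (n : nat) (hn : (2 <= n)%N) :
  exists (adj : rel 'I_n) (s t : 'I_n),
    irreflexive adj /\ s != t /\
    exists f : {set edge adj} -> R,
      [/\ normalized f, monotone f, submodular f &
          exists (Cstar : {set edge adj}) (nustar : R),
            [/\ min_coop_cut s t f Cstar,
                max_coop_flow_value s t f nustar &
                f Cstar / nustar = (n - 1)%:R]].
Proof.
case: n hn => [|[|m]] // _.
exists (adjP m), ord0, ord_max; split; first exact: adjP_irr.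
split; first by [].
exists (@fE R m); split; [exact: fE_norm|exact: fE_mono|exact: fE_sub|].
have kpos : 0 < (m.+1)%:R :> R by rewrite ltr0Sn.
exists setT, (1 / (m.+1)%:R); split.
- split.
    by case=> // e p _; rewrite /= in_setT.
  move=> C' hC; rewrite fE_T /fE; case: eqP => // h.
  move: (hC _ (p0_path m)); rewrite h.
  by move/hasP => [x _]; rewrite inE.
- split.
    exists [ffun => 1 / (m.+1)%:R]; split.
    + by move=> e; rewrite ffunE divr_ge0 ?ler0n.
    + move=> A; rewrite /fE; case: eqP => [->|_]; first by rewrite big_set0.
      have Hs := @flow_sum R m _ _ (@cons_const R m (1 / (m.+1)%:R)).
      rewrite div1r mulfV ?pnatr_eq0 // in Hs.
      move: Hs; set S := (X in X = _) => Hs.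
      apply: (@le_trans _ _ S); last by rewrite Hs.
      rewrite /S.
      rewrite [X in _ <= X](bigID (fun e => e \in A)) /= div1r lerDl.
      by apply: sumr_ge0 => e _; rewrite ffunE invr_ge0 ler0n.
    + exact: cons_const.
  move=> nu' phi' [_ hA hc].
  have := hA setT; rewrite fE_T.
  have -> : \sum_(e in [set: edge (adjP m)]) phi' e = \sum_e phi' e.
    by apply: eq_bigl => e; rewrite in_setT.
  rewrite (@flow_sum R m _ _ hc) => h.
  by rewrite ler_pdivlMr // mulrC.
- by rewrite fE_T div1r invrK mul1r subn1.
Qed.
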